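(* Let $u^m\in\mathbb{P}^{\mathrm{disc}}_0(\mathcal{T}_h)$ and $v^m\in\mathbb{P}^{\mathrm{cont}}_1(\mathcal{T}_h)$ be given and let $(v^{m+1},u^{m+1},\mu_\varepsilon^{m+1})$ be any solution of the fully discrete scheme (Step 1 and Step 2 described in the context). Then $$a^{upw}_h(\mu_\varepsilon^{m+1};(u^{m+1})_\oplus,\mu_\varepsilon^{m+1})\ge 0,$$ and consequently the scheme is unconditionally energy stable: $$E_\varepsilon(u^{m+1},v^{m+1})\le E_\varepsilon(u^m,v^m),$$ where $E_\varepsilon(u,v)=\int_\Omega\Big(k_0(u+\varepsilon)\log(u+\varepsilon)-k_1uv+\frac{k_1k_2}{2k_4}|\nabla v|^2+\frac{k_1k_3}{2k_4}v^2\Big)$.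
   Context: Let $\Omega\subset\mathbb{R}^2$ be a bounded polygonal domain and $\mathcal{T}_h$ a shape-regular triangular mesh of $\overline\Omega$ of size $h$. $\mathcal{E}_h^i$ denotes the set of interior edges. For an interior edge $e=\partial K\cap\partial L$ the two adjacent triangles are labelled $K,L$ so that the unit normal $\mathbf{n}_e$ points from $K$ to $L$; for a function $w$, $w_K,w_L$ are its traces from $K$ and $L$ and the jump is $[\![w]\!]=w_K-w_L$. $C_K$ denotes the barycenter of $K$, and $\mathcal{D}_e=|C_K-C_L|$ for $e=K\cap L\in\mathcal{E}_h^i$. The mesh is assumed to satisfy: (H1) for every interior edge $e=K\cap L$, the segment joining $C_K$ and $C_L$ is orthogonal to $e$; (H2) every angle of every triangle of $\mathcal{T}_h$ is at most $\pi/2$. $\mathbb{P}^{\mathrm{disc}}_0(\mathcal{T}_h)$ is the space of piecewise constant functions on $\mathcal{T}_h$, $\mathbb{P}^{\mathrm{cont}}_1(\mathcal{T}_h)$ the space of continuous piecewise linear functions, and $\Pi_0$ the $L^2(\Omega)$-orthogonal projection onto $\mathbb{P}^{\mathrm{disc}}_0(\mathcal{T}_h)$. For a scalar $w$, $w_\oplus=\max\{w,0\}$, $w_\ominus=-\min\{w,0\}$. $(\cdot,\cdot)$ is the $L^2(\Omega)$ inner product and $(f,g)_h=\int_\Omega I_h(fg)$ the mass-lumped inner product, $I_h$ being the nodal $\mathbb{P}_1$ interpolant. The upwind form is $$a^{upw}_h(\mu;u,\bar u)=\int_\Omega(\nabla\mu\cdot\nabla\bar u)\,u+\sum_{e\in\mathcal{E}_h^i,\,e=K\cap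 L}\frac{1}{\mathcal{D}_e}\int_e\Big(([\![\Pi_0\mu]\!])_\oplus u_K-([\![\Pi_0\mu]\!])_\ominus u_L\Big)[\![\bar u]\!].$$ Parameters: $k_0,\dots,k_4>0$, $\tau\in\{0,1\}$, time step $\Delta t>0$, $\varepsilon>0$; $\delta_t w^{m+1}=(w^{m+1}-w^m)/\Delta t$. The scheme: Step 1: find $v^{m+1}\in\mathbb{P}^{\mathrm{cont}}_1(\mathcal{T}_h)$ with $\tau(\delta_t v^{m+1},\bar v)_h+k_2(\nabla v^{m+1},\nabla\bar v)+k_3(v^{m+1},\bar v)_h-k_4(u^m,\bar v)=0$ for all $\bar v\in\mathbb{P}^{\mathrm{cont}}_1(\mathcal{T}_h)$. Step 2: find $(u^{m+1},\mu_\varepsilon^{m+1})\in\mathbb{P}^{\mathrm{disc}}_0(\mathcal{T}_h)^2$ with $u^{m+1}+\varepsilon>0$ such that $(\delta_t u^{m+1},\bar u)+a^{upw}_h(\mu_\varepsilon^{m+1};(u^{m+1})_\oplus,\bar u)=0$ and $(\mu_\varepsilon^{m+1},\bar\mu)-k_0(\log(u^{m+1}+\varepsilon),\bar\mu)+k_1(v^{m+1},\bar\mu)=0$ for all $\bar u,\bar\mu\in\mathbb{P}^{\mathrm{disc}}_0(\mathcal{T}_h)$. (It is assumed $u^m+\varepsilon>0$ so that $E_\varepsilon(u^m,v^m)$ is defined.) *)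

(* Defs.v *)
From HB Require Import structures.
From mathcomp Require Import all_boot all_order all_algebra.
From mathcomp Require Import reals exp.

Set Implicit Arguments.
Unset Strict Implicit.
Unset Printing Implicit Defensive.

Import Order.TTheory GRing.Theory Num.Theory.
Local Open Scope ring_scope.

(*   P0^disc(T_h) = functions T -> R (value on each triangle);              *)
(*   P1^cont(T_h) = functions V -> R (nodal values; on a conforming mesh a   *)
(*                  continuous piecewise linear function is determined by,   *)
(*                  and determines, its nodal values).                       *)
(* All integrals below are the exact integrals of the (piecewise polynomial) *)
(* integrands, computed triangle by triangle.                               *)

Section Mesh.
Variables (R : realType) (V T : finType) (x : V -> R * R) (vtx : T -> 'I_3 -> V).

Definition dot (p q : R * R) : R := p.1 * q.1 + p.2 * q.2.
Definition vsub (p q : R * R) : R * R := (p.1 - q.1, p.2 - q.2).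
Definition dist (p q : R * R) : R := Num.sqrt (dot (vsub p q) (vsub p q)).

Definition i0 : 'I_3 := @Ordinal 3 0 isT.
Definition i1 : 'I_3 := @Ordinal 3 1 isT.
Definition i2 : 'I_3 := @Ordinal 3 2 isT.

Definition det2 (K : T) : R :=
  let p0 := x (vtx K i0) in let p1 := x (vtx K i1) in let p2 := x (vtx K i2) in
  (vsub p1 p0).1 * (vsub p2 p0).2 - (vsub p2 p0).1 * (vsub p1 p0).2.

Definition area (K : T) : R := `|det2 K| / 2.

Definition bary (K : T) : R * R :=
  ((\sum_(i < 3) (x (vtx K i)).1) / 3, (\sum_(i < 3) (x (vtx K i)).2) / 3).

Definition in_open_tri (K : T) (p : R * R) : Prop :=
  exists lam : 'I_3 -> R, (forall i, 0 < lam i) /\ \sum_(i < 3) lam i = 1 /\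
    p = (\sum_(i < 3) lam i * (x (vtx K i)).1, \sum_(i < 3) lam i * (x (vtx K i)).2).
Definition in_closed_tri (K : T) (p : R * R) : Prop :=
  exists lam : 'I_3 -> R, (forall i, 0 <= lam i) /\ \sum_(i < 3) lam i = 1 /\
    p = (\sum_(i < 3) lam i * (x (vtx K i)).1, \sum_(i < 3) lam i * (x (vtx K i)).2).

(* Conforming triangulation (of the polygon Omega = union of the triangles): *)
Definition conforming_mesh : Prop :=
  injective x /\
  (forall K, det2 K != 0) /\
  (forall a : V, exists K i, vtx K i = a) /\
  (forall K L p, K != L -> ~ (in_open_tri K p /\ in_open_tri L p)) /\
  (forall K (a : V), in_closed_tri K (x a) -> exists i, vtx K i = a).

Definition verts (K : T) : {set V} := [set vtx K i | i : 'I_3].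
Definition common (K L : T) : {set V} := verts K :&: verts L.

Definition adj (K L : T) : bool := (K != L) && (#|common K L| == 2)%N.

(* |e| for e = K ∩ L : distance between the two common vertices *)
Definition edge_len (K L : T) : R :=
  \big[Num.max/0]_(a in common K L) \big[Num.max/0]_(b in common K L) dist (x a) (x b).

Definition De (K L : T) : R := dist (bary K) (bary L).

Definition H1 : Prop :=
  forall K L, adj K L -> forall a b, a \in common K L -> b \in common K L ->
    dot (vsub (bary K) (bary L)) (vsub (x a) (x b)) = 0.

(* (H2): every angle <= pi/2, i.e. its cosine is nonnegative *)
Definition H2 : Prop :=
  forall K (i j k : 'I_3), i != j -> i != k -> j != k ->
    0 <= dot (vsub (x (vtx K j)) (x (vtx K i))) (vsub (x (vtx K k)) (x (vtx K i))).

(* mean of a P1 function on K = (1/|K|) \int_K v *)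
Definition meanP1 (v : V -> R) (K : T) : R := (\sum_(i < 3) v (vtx K i)) / 3.

Definition gradP1 (v : V -> R) (K : T) : R * R :=
  let p0 := x (vtx K i0) in let p1 := x (vtx K i1) in let p2 := x (vtx K i2) in
  let d1 := v (vtx K i1) - v (vtx K i0) in let d2 := v (vtx K i2) - v (vtx K i0) in
  ((d1 * (vsub p2 p0).2 - d2 * (vsub p1 p0).2) / det2 K,
   (d2 * (vsub p1 p0).1 - d1 * (vsub p2 p0).1) / det2 K).

Definition ip00 (u w : T -> R) : R := \sum_K area K * u K * w K.
Definition ip01 (u : T -> R) (v : V -> R) : R := \sum_K area K * u K * meanP1 v K.
Definition ipgrad (v w : V -> R) : R := \sum_K area K * dot (gradP1 v K) (gradP1 w K).
(* mass-lumped (v, w)_h = \int I_h(v w) for v, w in P1 *)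
Definition iph (v w : V -> R) : R :=
  \sum_K area K / 3 * \sum_(i < 3) v (vtx K i) * w (vtx K i).

Definition posp (w : R) : R := Num.max w 0.
Definition negp (w : R) : R := - Num.min w 0.

(* a^upw_h(mu; u, ubar) for mu, u, ubar in P0.  Pi_0 mu = mu and the broken   *)
(* gradients of P0 functions vanish, so only the interior-edge sum remains.  *)
(* Each interior edge e = K ∩ L is counted once, with the labelling (K, L)   *)
(* fixed by the enumeration order of T.                                      *)
Definition a_upw (mu u ub : T -> R) : R :=
  \sum_K \sum_(L | adj K L && (enum_rank K < enum_rank L)%N)
    edge_len K L / De K L *
      (posp (mu K - mu L) * u K - negp (mu K - mu L) * u L) * (ub K - ub L).

Definition energy (k0 k1 k2 k3 k4 eps : R) (u : T -> R) (v : V -> R) : R :=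
  \sum_K area K * (k0 * ((u K + eps) * ln (u K + eps)) - k1 * u K * meanP1 v K)
  + k1 * k2 / (2 * k4) * ipgrad v v
  + k1 * k3 / (2 * k4) * iph v v.

Definition step1 (k2 k3 k4 tau dt : R) (um : T -> R) (vm vp : V -> R) : Prop :=
  forall vb : V -> R,
    tau * iph (fun a => (vp a - vm a) / dt) vb + k2 * ipgrad vp vb
    + k3 * iph vp vb - k4 * ip01 um vb = 0.

Definition step2 (k0 k1 dt eps : R) (um : T -> R) (vp : V -> R) (up mup : T -> R) : Prop :=
  (forall K, 0 < up K + eps) /\
  (forall ub : T -> R,
     ip00 (fun K => (up K - um K) / dt) ub + a_upw mup (fun K => posp (up K)) ub = 0) /\
  (forall mub : T -> R,
     ip00 mup mub - k0 * ip00 (fun K => ln (up K + eps)) mub + k1 * ip01 mub vp = 0).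

End Mesh.

(* Main.v *)
Require Import Defs.
From HB Require Import structures.
From mathcomp Require Import all_boot all_order all_algebra.
From mathcomp Require Import reals exp.
From mathcomp Require Import ring lra.
Import Order.TTheory GRing.Theory Num.Theory.
Local Open Scope ring_scope.

Lemma a_upw_ge0 (R : realType) (V T : finType) (x : V -> R * R)
    (vtx : T -> 'I_3 -> V) mu u : (forall K, 0 <= u K) -> 0 <= a_upw x vtx mu u mu.
Proof.
move=> u0; rewrite /a_upw; apply: sumr_ge0 => K _; apply: sumr_ge0 => L _.
have e0 : 0 <= edge_len x vtx K L.
  rewrite /edge_len; apply: (big_ind (fun y => 0 <= y)) => // [a b ha hb|a _].
    by rewrite le_max ha.
  apply: (big_ind (fun y => 0 <= y)) => // [a' b ha hb|b _].
    by rewrite le_max ha.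
  exact: sqrtr_ge0.
have d0 : 0 <= De x vtx K L by exact: sqrtr_ge0.
rewrite -mulrA; apply: mulr_ge0; first exact: divr_ge0.
have uK := u0 K; have uL := u0 L.
have sq : 0 <= (mu K - mu L) * (mu K - mu L) by rewrite -expr2 sqr_ge0.
rewrite /posp /negp; case: (lerP 0 (mu K - mu L)) => hd.
  rewrite oppr0 mul0r subr0 mulrAC; exact: mulr_ge0.
by rewrite mul0r sub0r !mulNr opprK mulrAC; apply: mulr_ge0.
Qed.

Lemma sum_sub (R : realType) (T : finType) (F G : T -> R) :
  \sum_K F K - \sum_K G K = \sum_K (F K - G K).
Proof. by rewrite sumrB. Qed.

Lemma xlnx_conv (R : realType) (s t : R) : 0 < s -> 0 < t ->
  s * ln s - t * ln t <= (ln s + 1) * (s - t).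
Proof.
move=> s0 t0.
have h : ln (1 + (s / t - 1)) <= s / t - 1.
  apply: le_ln1Dx. rewrite ltrBrDr addrC subrr; exact: divr_gt0.
have e : 1 + (s / t - 1) = s / t by ring.
rewrite e ln_div ?posrE // in h.
have h2 : t * (ln s - ln t) <= t * (s / t - 1) by rewrite ler_pM2l.
have e2 : t * (s / t - 1) = s - t by field; rewrite gt_eqF.
rewrite e2 in h2.
have -> : s * ln s - t * ln t = (s - t) * ln s + t * (ln s - ln t) by ring.
have -> : (ln s + 1) * (s - t) = (s - t) * ln s + (s - t) by ring.
by rewrite lerD2l.
Qed.

Section Aux.
Variables (R : realType) (V T : finType) (x : V -> R * R) (vtx : T -> 'I_3 -> V).

Lemma area_ge0 K : 0 <= area x vtx K.
Proof. by rewrite /area divr_ge0. Qed.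

Lemma ipgrad_polar (f g : V -> R) :
  2 * ipgrad x vtx f (fun a => f a - g a) =
  ipgrad x vtx f f - ipgrad x vtx g g + ipgrad x vtx (fun a => f a - g a) (fun a => f a - g a).
Proof.
rewrite /ipgrad mulr_sumr -sumrB -big_split /=; apply: eq_bigr => K _.
rewrite /gradP1 /dot /=; ring.
Qed.

Lemma iph_polar (f g : V -> R) :
  2 * iph x vtx f (fun a => f a - g a) =
  iph x vtx f f - iph x vtx g g + iph x vtx (fun a => f a - g a) (fun a => f a - g a).
Proof.
rewrite /iph mulr_sumr -sumrB -big_split /=; apply: eq_bigr => K _.
rewrite !big_ord_recr !big_ord0 /=; ring.
Qed.

Lemma ipgrad_ge0 (f : V -> R) : 0 <= ipgrad x vtx f f.
Proof.
rewrite /ipgrad; apply: sumr_ge0 => K _; apply: mulr_ge0; first exact: area_ge0.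
by rewrite /dot; apply: addr_ge0; rewrite -expr2 sqr_ge0.
Qed.

Lemma iph_ge0 (c : R) (f : V -> R) : 0 <= c -> 0 <= iph x vtx (fun a => f a / c) f.
Proof.
move=> c0; rewrite /iph; apply: sumr_ge0 => K _; apply: mulr_ge0.
  by apply: divr_ge0 => //; exact: area_ge0.
apply: sumr_ge0 => i _; rewrite mulrAC; apply: divr_ge0 => //.
by rewrite -expr2 sqr_ge0.
Qed.

Lemma meanP1B (f g : V -> R) K : meanP1 vtx (fun a => f a - g a) K = meanP1 vtx f K - meanP1 vtx g K.
Proof. by rewrite /meanP1 sumrB mulrBl. Qed.

End Aux.

Theorem mainTheorem5 (R : realType) (V T : finType) (x : V -> R * R)
    (vtx : T -> 'I_3 -> V)
    (hmesh : conforming_mesh x vtx) (hH1 : H1 x vtx) (hH2 : H2 x vtx)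
    (k0 k1 k2 k3 k4 tau dt eps : R)
    (hk0 : 0 < k0) (hk1 : 0 < k1) (hk2 : 0 < k2) (hk3 : 0 < k3) (hk4 : 0 < k4)
    (htau : tau = 0 \/ tau = 1) (hdt : 0 < dt) (heps : 0 < eps)
    (um : T -> R) (vm : V -> R) (hum : forall K, 0 < um K + eps)
    (vp : V -> R) (up mup : T -> R)
    (hstep1 : step1 x vtx k2 k3 k4 tau dt um vm vp)
    (hstep2 : step2 x vtx k0 k1 dt eps um vp up mup) :
  0 <= a_upw x vtx mup (fun K => posp (up K)) mup /\
  energy x vtx k0 k1 k2 k3 k4 eps up vp <= energy x vtx k0 k1 k2 k3 k4 eps um vm.
Proof.
have ha : 0 <= a_upw x vtx mup (fun K => posp (up K)) mup.
  by apply: a_upw_ge0 => K; rewrite /posp le_max lexx orbT.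
split => //.
have [hpos [h2 h3]] := hstep2.
have dt0 : dt != 0 by rewrite gt_eqF.
pose D := fun K => (up K - um K) / dt.
pose dv := fun a => vp a - vm a.
have a1 : a_upw x vtx mup (fun K => posp (up K)) (fun _ => 1) = 0.
  by rewrite /a_upw big1 // => K _; rewrite big1 // => L _; rewrite subrr mulr0.
have M0 : \sum_K area x vtx K * (up K - um K) = 0.
  have := h2 (fun _ => 1); rewrite a1 addr0 /ip00 => e.
  have -> : \sum_K area x vtx K * (up K - um K) =
     dt * \sum_K area x vtx K * ((up K - um K) / dt) * 1.
    by rewrite mulr_sumr; apply: eq_bigr => K _; field.
  by rewrite e mulr0.
have hU := h2 mup.
have hW := h3 D.
have hS := hstep1 dv.
have conv : \sum_K area x vtx K * ((up K + eps) * ln (up K + eps))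
          - \sum_K area x vtx K * ((um K + eps) * ln (um K + eps))
        <= \sum_K area x vtx K * ln (up K + eps) * (up K - um K)
          + \sum_K area x vtx K * (up K - um K).
  rewrite -sumrB -big_split /=; apply: ler_sum => K _.
  rewrite -mulrBr -mulrA -mulrDr; apply: ler_wpM2l; first exact: area_ge0.
  have := (@xlnx_conv _ _ _ (hpos K) (hum K)).
  have -> : up K + eps - (um K + eps) = up K - um K by ring.
  by move=> h; apply: (le_trans h); rewrite mulrDl mul1r.
have I2 : dt * ip00 x vtx (fun K => ln (up K + eps)) D =
          \sum_K area x vtx K * ln (up K + eps) * (up K - um K).
  by rewrite /ip00 mulr_sumr; apply: eq_bigr => K _; rewrite /D; field.
have I4 : ip01 x vtx up vp - ip01 x vtx um vm =
          dt * ip01 x vtx D vp + ip01 x vtx um dv.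
  rewrite /ip01 mulr_sumr -sumrB -big_split /=; apply: eq_bigr => K _.
  by rewrite /dv meanP1B /D; field.
have Isym : ip00 x vtx mup D = ip00 x vtx D mup.
  by rewrite /ip00; apply: eq_bigr => K _; ring.
have En : forall u v, energy x vtx k0 k1 k2 k3 k4 eps u v =
   k0 * \sum_K area x vtx K * ((u K + eps) * ln (u K + eps))
   - k1 * ip01 x vtx u v + k1 * k2 / (2 * k4) * ipgrad x vtx v v
   + k1 * k3 / (2 * k4) * iph x vtx v v.
  move=> u v; rewrite /energy /ip01; congr (_ + _ + _).
  rewrite !mulr_sumr -sumrB; apply: eq_bigr => K _; ring.
have Gpol := ipgrad_polar _ _ _ x vtx vp vm.
have Hpol := iph_polar _ _ _ x vtx vp vm.
have Gd0 := ipgrad_ge0 _ _ _ x vtx dv.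
have Hd0 : 0 <= iph x vtx dv dv.
  have := iph_ge0 _ _ _ x vtx 1 dv ler01.
  by congr (_ <= _); rewrite /iph; apply: eq_bigr => K _; congr (_ * _);
    apply: eq_bigr => i _; rewrite divr1.
have Tt0 : 0 <= iph x vtx (fun a => (vp a - vm a) / dt) dv.
  exact: (iph_ge0 _ _ _ x vtx dt dv (ltW hdt)).
have tau0 : 0 <= tau by case: htau => ->; rewrite ?lexx ?ler01.
rewrite !En.
rewrite M0 addr0 -I2 in conv.
rewrite Isym in hW.
move: I4 hW hS Gpol Hpol Gd0 Hd0 Tt0 conv hU ha.
rewrite -/D.
move: (ip01 x vtx up vp) (ip01 x vtx um vm) (ip01 x vtx D vp) (ip01 x vtx um dv) => Xp Xm X Y.
move: (ip00 x vtx D mup) (ip00 x vtx (fun K => ln (up K + eps)) D) => P L.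
move: (a_upw x vtx mup (fun K => posp (up K)) mup) => a.
move: (ipgrad x vtx vp vp) (ipgrad x vtx vm vm) (ipgrad x vtx dv dv) (ipgrad x vtx vp dv) => Gp Gm Gd Q.
move: (iph x vtx vp vp) (iph x vtx vm vm) (iph x vtx dv dv) (iph x vtx vp dv) => Hp Hm Hd Z.
move: (iph x vtx (fun a => (vp a - vm a) / dt) dv) => Tt.
move: (\sum_K area x vtx K * ((up K + eps) * ln (up K + eps))) => Fp.
move: (\sum_K area x vtx K * ((um K + eps) * ln (um K + eps))) => Fm.
move=> I4 hW hS Gpol Hpol Gd0 Hd0 Tt0 conv hU ha.
have eXp : Xp = Xm + dt * X + Y by lra.
have eY : Y = (tau * Tt + k2 * Q + k3 * Z) / k4.
  have -> : tau * Tt + k2 * Q + k3 * Z = k4 * Y by lra.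
  by field; rewrite gt_eqF.
have eGp : Gp = 2 * Q + Gm - Gd by lra.
have eHp : Hp = 2 * Z + Hm - Hd by lra.
have eX : k1 * X = k0 * L - P by lra.
rewrite -subr_le0.
have -> : k0 * Fp - k1 * Xp + k1 * k2 / (2 * k4) * Gp + k1 * k3 / (2 * k4) * Hp -
  (k0 * Fm - k1 * Xm + k1 * k2 / (2 * k4) * Gm + k1 * k3 / (2 * k4) * Hm) =
  (k0 * (Fp - Fm) - dt * (k1 * X)) - (k1 / k4) * (tau * Tt + k2 / 2 * Gd + k3 / 2 * Hd).
  by rewrite eXp eY eGp eHp; field; rewrite gt_eqF.
have h1 : k0 * (Fp - Fm) <= k0 * (dt * L) by rewrite ler_pM2l.
have h2' : 0 <= k1 / k4 * (tau * Tt + k2 / 2 * Gd + k3 / 2 * Hd).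
  apply: mulr_ge0; first exact: divr_ge0 (ltW hk1) (ltW hk4).
  have k2h : 0 <= k2 / 2 by apply: divr_ge0; [exact: ltW|].
  have k3h : 0 <= k3 / 2 by apply: divr_ge0; [exact: ltW|].
  by apply: addr_ge0; [apply: addr_ge0|]; apply: mulr_ge0.
have h3' : 0 <= dt * a by apply: mulr_ge0 => //; exact: ltW.
rewrite eX.
have eP : P = - a by lra.
have -> : dt * (k0 * L - P) = k0 * (dt * L) + dt * a by rewrite eP; ring.
lra.
Qed.
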